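(* Let $h \ge 2$, $N_H \ge 1$, $f \ge 0$ and $0 \le e \le f$ be integers, and consider an IBF with $h$ hash functions and $N = h N_H$ cells storing $f$ elements, whose state matrix is an $h$-tuple $(\mathbf{F}_1, \ldots, \mathbf{F}_h) \in \mathcal{S}_{N_H,f}^h$. Then the number of $h$-tuples $(\mathbf{F}_1, \ldots, \mathbf{F}_h) \in \mathcal{S}_{N_H,f}^h$ for which the extraction process extracts at least $e$ elements is at least $$\Theta(N_H, f, h, e) = \binom{f}{e} \sum_{\mathbf{b} \in \mathcal{T}_e \,:\, \xi(\mathbf{b}) \ge e} \left( \Psi(e, \mathbf{b}) \prod_{i=1}^{h} \left[ \binom{N_H}{b_i}\, b_i!\, z(N_H - b_i, f - b_i) \right] \right).$$
   Context: For integers $n, m \ge 0$, let $\mathcal{S}_{n,m}$ denote the set of all $n \times m$ binary matrices in which every column has Hamming weight exactly one (so $|\mathcal{S}_{n,m}| = n^m$; $\mathcal{S}_{n,0}$ consists of the single empty matrix, and $\mathcal{S}_{0,m} = \emptyset$ for $m \ge 1$). A binary matrix is called a stopping matrix if none of its rows has Hamming weight exactly one. Let $z(n, m)$ denote the number of matrices in $\mathcal{S}_{n,m}$ that are stopping matrices (so $z(n,0)=1$, $z(0,m)=0$ for $m\ge1$). The state matrix of an IBF with $h$ hash functions, $N = hN_H$ cells (partitioned into $h$ sub-filters of $N_H$ cells, the $i$-th hash function mapping into the $i$-th sub-filter) and $f$ inserted elements $x_1,\dots,x_f$ is the $h$-tuple $(\mathbf{F}_1,\dots,\mathbf{F}_h)$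 with $\mathbf{F}_i \in \mathcal{S}_{N_H,f}$, where $\mathbf{F}_i$ has a $1$ in row $r$, column $j$ iff the $i$-th hash function maps $x_j$ to cell $r$ of the $i$-th sub-filter; equivalently the $hN_H \times f$ matrix obtained by stacking $\mathbf{F}_1,\dots,\mathbf{F}_h$ vertically. Extraction (peeling) process: columns are removed simultaneously from all blocks; while there is some $i \in [h]$ and some row of $\mathbf{F}_i$ whose restriction to the not-yet-removed columns has Hamming weight exactly one, remove (extract) the column containing that unique $1$; stop when no block has a row of weight one on the remaining columns. The number of extracted elements is the number of removed columns (independent of the order of removals). For $e \in \mathbb{N}$, $\mathcal{T}_e$ is the set of vectors $\mathbf{b} = (b_1, \ldots, b_h) \in \mathbb{N}^h$ with all entries in $\{0, 1, \ldots, e\}$, and $\xi(\mathbf{b}) = \sum_{i=1}^h b_i$. The function $\Psi$ is defined recursively for $e \in \mathbb{N}$, $\mathbf{b} \in \mathbb{N}^h$ by $\Psi(0, \mathbf{0}) = 1$, $\Psi(0, \mathbf{b}) = 0$ for $\mathbf{b} \ne \mathbf{0}$, and for $e \ge 1$: $\Psi(e, \mathbf{b}) = \prod_{i=1}^{h} \binom{e}{b_i} - \sum_{j=0}^{e-1} \binom{e}{j} \Psi(j, \mathbf{b})$. ($\mathbb{N}$ includes $0$.) *)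

(* Defs.v *)
From mathcomp Require Import all_boot all_order all_algebra.
Set Implicit Arguments. Unset Strict Implicit. Unset Printing Implicit Defensive.
Import GRing.Theory Num.Theory.

(* A matrix in S_{n,m} (n x m binary, every column of weight one) is encoded
   by the function sending column j to the row holding its unique 1. *)
Definition Smat (n m : nat) := {ffun 'I_m -> 'I_n}.

Definition row_wt n m (F : Smat n m) (R : {set 'I_m}) (r : 'I_n) : nat :=
  #|[set j in R | F j == r]|.

Definition stopping n m (F : Smat n m) : bool :=
  [forall r : 'I_n, row_wt F setT r != 1%N].

Definition z (n m : nat) : nat := #|[set F : Smat n m | stopping F]|.

Definition state (h NH f : nat) := {ffun 'I_h -> Smat NH f}.

Definition extractable h NH f (Fs : state h NH f) (R : {set 'I_f}) (j : 'I_f)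
  : bool :=
  (j \in R) && [exists i : 'I_h, row_wt (Fs i) R (Fs i j) == 1%N].

(* one step of the extraction process: remove one extractable column
   (the extraction count is independent of the removal order; we fix
   the order by picking some extractable column) *)
Definition peel_step h NH f (Fs : state h NH f) (R : {set 'I_f}) : {set 'I_f} :=
  match [pick j | extractable Fs R j] with
  | Some j => R :\ j
  | None => R
  end.

(* remaining columns after the process stops (at most f removals) *)
Definition remaining h NH f (Fs : state h NH f) : {set 'I_f} :=
  iter f (peel_step Fs) setT.

Definition extracted h NH f (Fs : state h NH f) : nat :=
  (f - #|remaining Fs|)%N.

(* Psi(e, b): psis e b = [:: Psi(0,b); ...; Psi(e,b)] *)
Fixpoint psis (h : nat) (e : nat) (b : 'I_h -> nat) : seq int :=
  match e with
  | 0 => [:: (if [forall i, b i == 0%N] then 1 else 0)%R]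
  | e'.+1 =>
      let s := psis e' b in
      rcons s ((\prod_(i < h) ('C(e'.+1, b i))%:Z)
               - \sum_(j < e'.+1) ('C(e'.+1, j))%:Z * nth 0 s j)%R
  end.

Definition Psi (h : nat) (e : nat) (b : 'I_h -> nat) : int :=
  nth 0%R (psis e b) e.

(* T_e = {0..e}^h ; b : {ffun 'I_h -> 'I_e.+1} ; xi(b) = sum b_i *)
Definition xi h e (b : {ffun 'I_h -> 'I_e.+1}) : nat := \sum_(i < h) (b i : nat).

Definition Theta (NH f h e : nat) : int :=
  ('C(f, e))%:Z *
  \sum_(b : {ffun 'I_h -> 'I_e.+1} | (e <= xi b)%N)
     (Psi e (fun i => (b i : nat)) *
      \prod_(i < h) ('C(NH, b i) * (b i)`! * z (NH - b i) (f - b i))%:Z)%R.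

(* Main.v *)
Require Import Defs.
From mathcomp Require Import all_boot all_order all_algebra.
From mathcomp Require Import zify.
Import GRing.Theory Num.Theory.
Set Implicit Arguments. Unset Strict Implicit. Unset Printing Implicit Defensive.

Definition zT (A R : finType) : nat :=
  #|[set F : {ffun A -> R} | [forall r, #|[set a | F a == r]| != 1%N]]|.

Lemma z_zT n m : z n m = zT 'I_m 'I_n.
Proof.
rewrite /z /zT; apply: eq_card => F; rewrite !inE /stopping /row_wt.
apply: eq_forallb => r; congr (_ != _); apply: eq_card => a; by rewrite !inE.
Qed.

Section Bij.
Variables (A A' : finType) (eA : #|A'| = #|A|).
Definition bfun (a : A') : A := enum_val (cast_ord eA (enum_rank a)).
Definition bfunI (a : A) : A' := enum_val (cast_ord (esym eA) (enum_rank a)).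
Lemma bfunK : cancel bfun bfunI.
Proof. by move=> a; rewrite /bfun /bfunI enum_valK cast_ordK enum_rankK. Qed.
Lemma bfunIK : cancel bfunI bfun.
Proof. by move=> a; rewrite /bfun /bfunI enum_valK cast_ordKV enum_rankK. Qed.
End Bij.

Lemma card_fiber_bij (A A' : finType) (g : A' -> A) (g' : A -> A') (P : pred A) :
  cancel g g' -> cancel g' g -> #|[set a' | P (g a')]| = #|[set a | P a]|.
Proof.
move=> gK g'K.
rewrite -(card_imset _ (can_inj gK)); apply: eq_card => a.
rewrite [RHS]inE; apply/imsetP/idP => [[a' ]|Pa]; first by rewrite !inE => Pa ->.
by exists (g' a); rewrite ?inE g'K.
Qed.

Lemma zT_le (A A' R R' : finType) :
  #|A| = #|A'| -> #|R| = #|R'| -> (zT A R <= zT A' R')%N.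
Proof.
move=> eA eR.
pose g := bfun (esym eA); pose g' := bfunI (esym eA).
pose k := bfun eR; pose k' := bfunI eR.
have gK : cancel g g' := bfunK _. have g'K : cancel g' g := bfunIK _.
have kK : cancel k k' := bfunK _. have k'K : cancel k' k := bfunIK _.
pose Phi (F : {ffun A -> R}) : {ffun A' -> R'} := [ffun a' => k (F (g a'))].
have Phi_inj : injective Phi.
  move=> F1 F2 /ffunP E; apply/ffunP => a.
  by have := E (g' a); rewrite !ffunE g'K => /(can_inj kK).
rewrite /zT -(card_imset _ Phi_inj); apply: subset_leq_card.
apply/subsetP => F' /imsetP[F]; rewrite !inE => /forallP st ->.
apply/forallP => r'.
rewrite (_ : #|_| = #|[set a | F a == k' r']|) //.
rewrite -(card_fiber_bij (fun a => F a == k' r') gK g'K); apply: eq_card => a'.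
rewrite !inE ffunE; apply/eqP/eqP => [<-|->]; by rewrite ?kK ?k'K.
Qed.

Definition SsetG (A R : finType) (F : {ffun A -> R}) : {set A} :=
  [set j | #|[set k | F k == F j]| == 1%N].

Section Glue.
Variables (A R : finType) (B : {set A}) (r0 : R).
Notation sB := {x : A | x \in B}.
Notation sC := {x : A | x \in ~: B}.
Variable phi : {ffun sB -> R}.
Hypothesis phi_inj : injective phi.
Definition imphi := [set phi x | x : sB].
Notation sR := {r : R | r \in ~: imphi}.

Definition glue (k : {ffun sC -> sR}) : {ffun A -> R} :=
  [ffun a => match (insub a : option sB) with
             | Some x => phi x
             | None => match (insub a : option sC) with
                       | Some y => val (k y) | None => r0 end end].

Lemma glueB k a (aB : a \in B) : glue k a = phi (Sub a aB).
Proof. by rewrite ffunE insubT. Qed.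

Lemma glueC k a (aC : a \in ~: B) : glue k a = val (k (Sub a aC)).
Proof.
rewrite ffunE insubN; last by move: aC; rewrite inE.
by rewrite insubT.
Qed.

Lemma glue_restr k : [ffun x : sB => glue k (val x)] = phi.
Proof.
apply/ffunP => x; rewrite ffunE (glueB k (valP x)).
by congr (phi _); apply: val_inj; rewrite SubK.
Qed.

Lemma glue_inj : injective glue.
Proof.
move=> k1 k2 /ffunP E; apply/ffunP => y; apply: val_inj.
have := E (val y); rewrite (glueC k1 (valP y)) (glueC k2 (valP y)).
by rewrite (_ : Sub (val y) (valP y) = y) //; apply: val_inj; rewrite SubK.
Qed.

Lemma glue_Sset (k : {ffun sC -> sR}) : [forall r, #|[set a | k a == r]| != 1%N] -> SsetG (glue k) = B.
Proof.
move=> /forallP st; apply/setP => a; rewrite inE.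
have notim (y : sC) : glue k (val y) \notin imphi.
  rewrite (glueC k (valP y)); have := valP (k (Sub (val y) (valP y))).
  by rewrite inE.
have inim (x : sB) : glue k (val x) \in imphi.
  by rewrite (glueB k (valP x)); apply: imset_f.
case: (boolP (a \in B)) => aB.
  apply/eqP; rewrite (_ : [set k0 | glue k k0 == glue k a] = [set a]) ?cards1 //.
  apply/setP => a'; rewrite !inE.
  case: (boolP (a' \in B)) => a'B.
    rewrite (glueB k a'B) (glueB k aB); apply/eqP/eqP => [/phi_inj/(congr1 val)|e].
      by rewrite !SubK.
    by congr (phi _); apply: val_inj; rewrite !SubK.
  have a'C : a' \in ~: B by rewrite inE.
  rewrite (_ : (a' == a) = false); last by apply/negbTE; apply: contraNneq a'B => ->.
  apply/negbTE/negP => /eqP e1.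
  move: (notim (Sub a' a'C)); rewrite SubK e1.
  by move: (inim (Sub a aB)); rewrite SubK => ->.
have aC : a \in ~: B by rewrite inE.
pose y := (Sub a aC : sC).
have -> : [set k0 | glue k k0 == glue k a] = [set val y' | y' in [set y' | k y' == k y]].
  apply/setP => a'; rewrite inE; apply/idP/imsetP => [/eqP e1|[y']].
    case: (boolP (a' \in B)) => a'B.
      move: (notim y); rewrite SubK -e1.
      by move: (inim (Sub a' a'B)); rewrite SubK => ->.
    have a'C : a' \in ~: B by rewrite inE.
    exists (Sub a' a'C); last by rewrite SubK.
    rewrite inE; apply/eqP/val_inj.
    by move: e1; rewrite (glueC k a'C) (glueC k aC).
  rewrite inE => /eqP e1 ->; apply/eqP.
  by rewrite (glueC k (valP y')) (glueC k aC) -e1; congr (val (k _)); apply: val_inj; rewrite SubK.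
rewrite card_imset; last exact: val_inj.
exact/negbTE/(st (k y)).
Qed.

End Glue.

Lemma count_S (A R : finType) (B : {set A}) (r0 : R) :
  (#|R| ^_ #|B| * zT 'I_(#|A| - #|B|) 'I_(#|R| - #|B|) <=
   #|[set F : {ffun A -> R} | SsetG F == B]|)%N.
Proof.
set c := zT _ _.
have cB : #|{: {x : A | x \in B}}| = #|B| by rewrite card_sig.
rewrite -cB -card_inj_ffuns -sum_nat_const.
rewrite -sum1dep_card.
rewrite (partition_big (fun F : {ffun A -> R} => [ffun x : {x : A | x \in B} => F (val x)]) predT) //=.
apply: (@leq_trans (\sum_(phi in [set phi : {ffun {x : A | x \in B} -> R} | injectiveb phi])
    \sum_(F | (SsetG F == B) && ([ffun x : {x : A | x \in B} => F (val x)] == phi)) 1)).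
  apply: leq_sum => phi; rewrite inE => /injectiveP phi_inj.
  rewrite sum1dep_card.
  apply: (@leq_trans (zT {x : A | x \in ~: B} {r : R | r \in ~: imphi phi})).
    apply: zT_le; rewrite card_sig.
      by rewrite -(cardsC B) card_ord addKn; apply: eq_card => x; rewrite !inE.
    rewrite card_ord.
    have : #|imphi phi| = #|B| by rewrite card_imset // -cB.
    by rewrite -(cardsC (imphi phi)) => <-; rewrite addKn; apply: eq_card => x; rewrite !inE.
  rewrite /zT -(card_imset _ (@glue_inj _ _ B r0 phi)); apply: subset_leq_card.
  apply/subsetP => F /imsetP[k]; rewrite inE => st ->.
  rewrite inE in st.
  by rewrite (glue_Sset _ phi_inj) // glue_restr !eqxx.
rewrite [X in _ <= X](bigID (fun phi => phi \in [set phi : {ffun {x : A | x \in B} -> R} | injectiveb phi])) /=.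
exact: leq_addr.
Qed.
Definition Sset n m (F : Smat n m) : {set 'I_m} :=
  [set j | #|[set k | F k == F j]| == 1%N].
Definition Uset h NH f (Fs : state h NH f) : {set 'I_f} :=
  \bigcup_(i < h) SsetG (Fs i).

Lemma extr_inv h NH f (Fs : state h NH f) k :
  (#|iter k (peel_step Fs) setT| + minn k #|Uset Fs| <= f)%N.
Proof.
elim: k => [|k IH].
  by rewrite /= cardsT card_ord; lia.
rewrite iterS /peel_step; set R := iter k _ _.
case: pickP => [j /andP[jR _] | none].
  move: IH; rewrite (cardsD1 j R) jR add1n.
  move: (#|R :\ j|) (#|Uset Fs|) => a b; lia.
have dis : [disjoint R & Uset Fs].
  apply/pred0P => j /=; apply/negP => /andP[jR /bigcupP[i _ jS]].
  move: (none j); rewrite /extractable jR /= => /negbT/negP; apply; apply/existsP; exists i.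
  rewrite /row_wt; move: jS; rewrite inE => /eqP c1.
  have -> : [set j0 in R | Fs i j0 == Fs i j] = [set j].
    apply/eqP; rewrite eq_sym eqEcard cards1 sub1set !inE jR eqxx /=.
    rewrite -c1 subset_leq_card //; apply/subsetP => x; rewrite !inE => /andP[].
    by [].
  by rewrite cards1.
have := max_card (R :|: Uset Fs).
rewrite cardsU (disjoint_setI0 dis) cards0 subn0 card_ord.
move: (#|R|) (#|Uset Fs|) => a b; lia.
Qed.

Lemma extr_ge h NH f (Fs : state h NH f) : (#|Uset Fs| <= extracted Fs)%N.
Proof.
have := extr_inv Fs f; rewrite /extracted /remaining.
have := max_card (Uset Fs); rewrite card_ord.
move: (#|_|) (#|Uset Fs|) => a b; lia.
Qed.
Lemma size_psis h e (b : 'I_h -> nat) : size (psis e b) = e.+1.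
Proof. by elim: e => [|e IH] //=; rewrite size_rcons IH. Qed.

Lemma psis_nth h e (b : 'I_h -> nat) j : (j <= e)%N -> nth 0%R (psis e b) j = Psi j b.
Proof.
elim: e => [|e IH]; first by rewrite leqn0 => /eqP ->.
rewrite leq_eqVlt => /orP[/eqP -> //| lt]; rewrite /= nth_rcons size_psis lt; exact: IH.
Qed.

Lemma Psi_rec h n (b : 'I_h -> nat) :
  (Psi n b + \sum_(j < n) ('C(n, j))%:Z * Psi j b = \prod_(i < h) ('C(n, b i))%:Z)%R.
Proof.
case: n => [|n].
  rewrite big_ord0 addr0 /Psi /=.
  case: forallP => [all0 | /forallP/forallPn [i /negbTE bi]].
    by rewrite big1 // => i _; rewrite (eqP (all0 i)) bin0.
  rewrite (bigD1 i) //= bin0n bi mul0r //.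
rewrite /Psi /= nth_rcons size_psis ltnn eqxx.
rewrite (eq_bigr (fun j : 'I_n.+1 => ('C(n.+1, j))%:Z * Psi j b)%R) ?subrK //.
by move=> j _; rewrite psis_nth // -ltnS.
Qed.

Definition covS h (T : finType) (E : {set T}) (b : 'I_h -> nat) : nat :=
  #|[set Bs : {ffun 'I_h -> {set T}} |
      [forall i, #|Bs i| == b i] && (\bigcup_(i < h) Bs i == E)]|.

Lemma prodC_cov h (T : finType) (E : {set T}) (b : 'I_h -> nat) :
  \prod_(i < h) 'C(#|E|, b i) = \sum_(U : {set T} | U \subset E) covS U b.
Proof.
pose Q := fun (i : 'I_h) (B : {set T}) => (B \subset E) && (#|B| == b i).
transitivity (\prod_(i < h) \sum_(B | Q i B) 1)%N.
  by apply: eq_bigr => i _; rewrite sum1dep_card cards_draws.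
rewrite bigA_distr_big_dep /=.
rewrite (partition_big (fun Bs : {ffun 'I_h -> {set T}} => \bigcup_(i < h) Bs i)
   (fun U => U \subset E)); last first.
  by move=> Bs /familyP QB; apply/bigcupsP => i _; case/andP: (QB i).
apply: eq_bigr => U UE.
rewrite /covS -sum1dep_card; rewrite big_mkcond [RHS]big_mkcond /=.
apply: eq_bigr => Bs _; rewrite big1_eq.
congr (if _ then _ else _).
case: (\bigcup_(i < h) Bs i =P U) => [UB|]; rewrite ?andbF ?andbT //.
apply/familyP/forallP => [QB i|sB i]; first by case/andP: (QB i).
rewrite unfold_in /Q sB andbT (subset_trans _ UE) // -UB.
exact: (bigcup_sup i).
Qed.

Lemma sum_cov_split h (T : finType) (E : {set T}) (b : 'I_h -> nat) :
  \sum_(U : {set T} | U \subset E) covS U b =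
  covS E b + \sum_(j < #|E|) \sum_(U : {set T} | (U \subset E) && (#|U| == j)) covS U b.
Proof.
set m := #|E|.
rewrite (partition_big (fun U : {set T} => (inord #|U| : 'I_m.+1)) predT) //.
rewrite big_ord_recr /= addnC.
congr (_ + _).
  rewrite (big_pred1 E) // => U; apply/andP/eqP => [[UE /eqP]|->].
    have := subset_leq_card UE.
    move=> le; move/(congr1 val); rewrite /= inordK ?ltnS // => eU.
    by apply/eqP; rewrite eqEcard UE eU leqnn.
  by split => //; apply/eqP/val_inj; rewrite /= inordK.
apply: eq_bigr => j _; apply: eq_bigl => U.
case UE: (U \subset E) => //=.
have le := subset_leq_card UE.
by rewrite -val_eqE /= inordK.
Qed.

Lemma covS_Psi h (T : finType) (E : {set T}) (b : 'I_h -> nat) :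
  ((covS E b)%:Z = Psi #|E| b)%R.
Proof.
have [n leEn] := ubnP #|E|; elim: n E leEn => // n IH E ltE.
set m := #|E|.
have key : (\prod_(i < h) ('C(m, b i))%:Z = (covS E b)%:Z +
          \sum_(j < m) ('C(m, j))%:Z * Psi j b)%R.
  rewrite -(big_morph Posz PoszM (erefl (1%:Z)%R)) prodC_cov.
  rewrite sum_cov_split PoszD (big_morph Posz PoszD (erefl (0%:Z)%R)).
  congr (_ + _)%R.
  apply: eq_bigr => j _.
  rewrite (big_morph Posz PoszD (erefl (0%:Z)%R)).
  rewrite (eq_bigr (fun _ => Psi j b)); last first.
    move=> U /andP[UE /eqP eU]; rewrite IH eU //.
    exact: leq_trans (ltn_ord j) ltE.
  rewrite (eq_bigl (fun U => U \in [set U : {set T} | (U \subset E) & (#|U| == j)])); last first.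
    by move=> U /=; rewrite inE.
  by rewrite sumr_const -mulr_natl cards_draws natz.
by apply/(addIr (\sum_(j < m) ('C(m, j))%:Z * Psi j b)%R); rewrite -key Psi_rec.
Qed.

Theorem lemma2 (h NH f e : nat) :
  (2 <= h)%N -> (1 <= NH)%N -> (e <= f)%N ->
  (Theta NH f h e <= (#|[set Fs : state h NH f | (e <= extracted Fs)%N]|)%:Z)%R.
Proof.
move=> _ NH1 ef.
have r0 : 'I_NH := Ordinal NH1.
pose D := [set E : {set 'I_f} | #|E| == e].
pose G (b : nat) := ('C(NH, b) * b`! * z (NH - b) (f - b))%N.
have cntS (B : {set 'I_f}) : (G #|B| <= #|[set F : Smat NH f | SsetG F == B]|)%N.
  have := count_S B r0; rewrite !card_ord -z_zT /G -bin_ffact //.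
have step2 (E : {set 'I_f}) : #|E| = e ->
  (\sum_(b : {ffun 'I_h -> 'I_e.+1} | (e <= xi b)%N) covS E (fun i => b i) * \prod_(i < h) G (b i)
     <= #|[set Fs : state h NH f | Uset Fs == E]|)%N.
  move=> eE.
  pose SB := fun Bs : {ffun 'I_h -> {set 'I_f}} => \bigcup_(i < h) Bs i == E.
  have e1 : (\sum_(b : {ffun 'I_h -> 'I_e.+1}) covS E (fun i => b i) * \prod_(i < h) G (b i)
      = \sum_(Bs | SB Bs) \prod_(i < h) G #|Bs i|)%N.
    rewrite (partition_big (fun Bs : {ffun 'I_h -> {set 'I_f}} => [ffun i => (inord #|Bs i| : 'I_e.+1)]) predT) //.
    apply: eq_bigr => b _.
    rewrite /covS -sum1dep_card big_distrl /=; apply: eq_big => [Bs|Bs].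
      rewrite /SB andbC; case: eqP => [UE|] //=; rewrite ?andbF //=.
      have le i : (#|Bs i| < e.+1)%N.
        by rewrite ltnS -eE -UE subset_leq_card // (bigcup_sup i).
      apply/forallP/eqP => [H|<- i].
        apply/ffunP => i; rewrite ffunE; apply: val_inj; rewrite /= inordK //.
        exact/eqP.
      by rewrite ffunE inordK.
    move=> /andP[/forallP H _]; rewrite mul1n; apply: eq_bigr => i _.
    by rewrite (eqP (H i)).
  have e2 : (\sum_(Bs | SB Bs) \prod_(i < h) #|[set F : Smat NH f | SsetG F == Bs i]|
      = #|[set Fs : state h NH f | Uset Fs == E]|)%N.
    have pU (Fs : state h NH f) : \bigcup_(i < h) [ffun i => SsetG (Fs i)] i = Uset Fs.
      by apply: eq_bigr => i _; rewrite ffunE.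
    rewrite -sum1dep_card (partition_big (fun Fs : state h NH f => [ffun i => SsetG (Fs i)]) SB); last first.
      by move=> Fs; rewrite /SB pU.
    apply: eq_bigr => Bs SBs.
    rewrite (eq_bigr (fun i => \sum_(F : Smat NH f | SsetG F == Bs i) 1)%N); last first.
      by move=> i _; rewrite sum1dep_card.
    rewrite bigA_distr_big_dep /=; apply: eq_big => [Fs|Fs _]; last by rewrite big1_eq.
    apply/familyP/andP => [H|[_ /eqP <-] i]; last by rewrite unfold_in /= ffunE.
    have eB : [ffun i => SsetG (Fs i)] = Bs.
      by apply/ffunP => i; rewrite ffunE; apply/eqP; exact: H.
    by split; [rewrite -pU eB | rewrite eB].

  rewrite -e2; apply: (@leq_trans (\sum_(Bs | SB Bs) \prod_(i < h) G #|Bs i|)%N).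
    rewrite -e1 [X in _ <= X](bigID (fun b : {ffun 'I_h -> 'I_e.+1} => e <= xi b)) /=.
    exact: leq_addr.
  by apply: leq_sum => Bs _; apply: leq_prod => i _; apply: cntS.
have step3 : (\sum_(E in D) #|[set Fs : state h NH f | Uset Fs == E]|
     <= #|[set Fs : state h NH f | (e <= extracted Fs)%N]|)%N.
  rewrite (eq_bigr (fun E => \sum_(Fs : state h NH f | (#|Uset Fs| == e) && (Uset Fs == E)) 1)%N); last first.
    move=> E; rewrite inE => /eqP eE; rewrite sum1dep_card; apply: eq_card => Fs.
    by rewrite !inE; case: (Uset Fs =P E) => [->|_]; rewrite ?andbF // eE eqxx.
  rewrite -(@partition_big _ _ _ _ _ _ (fun Fs : state h NH f => #|Uset Fs| == e) (@Uset h NH f) (fun E => E \in D) (fun _ => 1%N)); last by move=> Fs; rewrite inE.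
  rewrite sum1dep_card; apply: subset_leq_card; apply/subsetP => Fs; rewrite !inE => /eqP eU.
  by rewrite -eU extr_ge.
have eqTheta : Theta NH f h e = Posz (\sum_(E in D)
    \sum_(b : {ffun 'I_h -> 'I_e.+1} | (e <= xi b)%N) covS E (fun i => b i) * \prod_(i < h) G (b i))%N.
  rewrite /Theta (big_morph Posz PoszD (erefl (Posz 0))).
  rewrite (eq_bigr (fun _ : {set 'I_f} => \sum_(b : {ffun 'I_h -> 'I_e.+1} | (e <= xi b)%N)
      (Psi e (fun i => b i) * \prod_(i < h) Posz ('C(NH, b i) * (b i)`! * z (NH - b i) (f - b i))))%R).
    by rewrite sumr_const -mulr_natl natz card_draws card_ord.
  move=> E; rewrite inE => /eqP eE.
  rewrite (big_morph Posz PoszD (erefl (Posz 0))); apply: eq_bigr => b _.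
  rewrite PoszM -[X in Psi X _]eE -covS_Psi; congr (_ * _)%R.
  by rewrite (big_morph Posz PoszM (erefl (Posz 1))).
rewrite eqTheta lez_nat; apply: leq_trans step3.
by apply: leq_sum => E; rewrite inE => /eqP; exact: step2.
Qed.
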